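(* Let $q$ be a prime power. If $M$ is a round matroid that contains a $U_{2,q+2}$-restriction and a $\mathrm{PG}(2,q)$-restriction, then $M$ has a $U_{2,q^2+1}$-minor.
   Context: A matroid $M$ is round if $E(M)$ cannot be partitioned into two sets each of rank less than $r(M)$. $\mathrm{PG}(2,q)$ is the projective plane over $\mathrm{GF}(q)$; $U_{2,m}$ is the uniform matroid of rank $2$ on $m$ elements. *)

(* Defs.v *)
From HB Require Import structures.
From mathcomp Require Import all_boot all_order all_algebra.
Set Implicit Arguments. Unset Strict Implicit. Unset Printing Implicit Defensive.

Local Open Scope ring_scope.
Import GRing.Theory.

(* A matroid with ground set E (a subset of a finite type T) given by a rank
   function r; only the values of r on subsets of E matter. *)
Definition is_matroid (T : finType) (E : {set T}) (r : {set T} -> nat) : Prop :=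
  [/\ (forall X : {set T}, X \subset E -> (r X <= #|X|)%N),
      (forall X Y : {set T}, X \subset Y -> Y \subset E -> (r X <= r Y)%N) &
      (forall X Y : {set T}, X \subset E -> Y \subset E ->
         (r (X :|: Y) + r (X :&: Y) <= r X + r Y)%N)].

Definition round (T : finType) (E : {set T}) (r : {set T} -> nat) : Prop :=
  forall X Y : {set T}, X :|: Y = E -> X :&: Y = set0 ->
    r X = r E \/ r Y = r E.

Definition matroid_iso (T1 T2 : finType) (E1 : {set T1}) (r1 : {set T1} -> nat)
    (E2 : {set T2}) (r2 : {set T2} -> nat) : Prop :=
  exists f : T1 -> T2,
    [/\ {in E1 &, injective f}, f @: E1 = E2 &
        forall Y : {set T1}, Y \subset E1 -> r2 (f @: Y) = r1 Y].

Definition unif_ground (m : nat) : {set 'I_m} := setT.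
Definition unif_rank (k m : nat) (Y : {set 'I_m}) : nat := minn #|Y| k.

(* PG(2,F): points are the 1-dimensional subspaces of F^3, each represented
   canonically by the square matrix <<v>> (v a nonzero row vector); the rank
   of a set of points is the dimension of their span. *)
Definition PG2_ground (F : finFieldType) : {set 'M[F]_3} :=
  [set (<<v>>)%MS | v in [set v : 'rV[F]_3 | v != 0]].
Definition PG2_rank (F : finFieldType) (Y : {set 'M[F]_3}) : nat :=
  \rank (\sum_(P in Y) P)%MS.

Definition minor_ground (T : finType) (E C D : {set T}) : {set T} :=
  E :\: (C :|: D).
Definition minor_rank (T : finType) (r : {set T} -> nat) (C : {set T})
    (Y : {set T}) : nat := (r (Y :|: C) - r C)%N.

(* Main.v *)
Require Import Defs.
From HB Require Import structures.
From mathcomp Require Import all_boot all_order all_algebra.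
From mathcomp Require Import zify.
Set Implicit Arguments. Unset Strict Implicit. Unset Printing Implicit Defensive.

Section Mat.
Variables (T : finType) (E : {set T}) (s : {set T} -> nat).
Hypothesis ms : is_matroid E s.

Lemma m_card (X : {set T}) : X \subset E -> s X <= #|X|.
Proof. by case: ms => h _ _; apply: h. Qed.
Lemma m_mono (X Y : {set T}) : X \subset Y -> Y \subset E -> s X <= s Y.
Proof. by case: ms => _ h _; apply: h. Qed.
Lemma m_sub (X Y : {set T}) : X \subset E -> Y \subset E -> s (X :|: Y) + s (X :&: Y) <= s X + s Y.
Proof. by case: ms => _ _ h; apply: h. Qed.

Lemma m_sm (X Y Z W : {set T}) : X \subset E -> Y \subset E -> Z \subset X -> Z \subset Y ->
  W \subset X :|: Y -> s W + s Z <= s X + s Y.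
Proof.
move=> XE YE ZX ZY WXY.
have h1 := m_sub XE YE.
have h2 : s W <= s (X :|: Y) by apply: m_mono => //; rewrite subUset XE.
have h3 : s Z <= s (X :&: Y).
  apply: m_mono; first by rewrite subsetI ZX.
  by apply: subset_trans (subsetIl _ _) XE.
lia.
Qed.

Lemma m_set0 : s set0 = 0.
Proof. have := m_card (sub0set E). by rewrite cards0; lia. Qed.

Lemma m_closure (A X : {set T}) : A \subset E -> X \subset E ->
  (forall e, e \in X -> s (A :|: [set e]) <= s A) -> s (A :|: X) <= s A.
Proof.
move=> AE XE H.
have [n] := ubnP #|X|; elim: n X XE H => [//|n IHn] X XE H.
case: (set_0Vmem X) => [->|[e eX]]; first by rewrite setU0.
rewrite ltnS (cardsD1 e X) eX add1n => Xn.
have XE' : X :\ e \subset E by apply: subset_trans XE; rewrite subsetDl.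
have eE : e \in E by apply: (subsetP XE).
have IH' : s (A :|: (X :\ e)) <= s A.
  apply: (IHn (X :\ e) XE' _ Xn).
  by move=> f; rewrite !inE => /andP[_ /H].
have He := H e eX.
have := @m_sm (A :|: (X :\ e)) (A :|: [set e]) A (A :|: X).
have h1 : A :|: (X :\ e) \subset E by rewrite subUset AE XE'.
have h2 : A :|: [set e] \subset E by rewrite subUset AE sub1set eE.
have h3 : A :|: X \subset (A :|: (X :\ e)) :|: (A :|: [set e]).
  apply/subsetP=> y; rewrite !inE; case: (y =P e) => [->|]; rewrite ?eqxx ?orbT //.
  by move=> _ /=; case/orP=> ->; rewrite ?orbT.
move/(_ h1 h2 (subsetUl _ _) (subsetUl _ _) h3); lia.
Qed.

Lemma m_unit (A : {set T}) e : A \subset E -> e \in E -> s (A :|: [set e]) <= s A + 1.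
Proof.
move=> AE eE.
have := @m_sm A [set e] set0 (A :|: [set e]) AE.
rewrite sub1set eE !sub0set subxx m_set0 => /(_ isT isT isT isT).
have := m_card (X := [set e]); rewrite sub1set eE cards1 => /(_ isT). lia.
Qed.

End Mat.

Section PG.
Import GRing.Theory.
Variable F : finFieldType.
Local Notation q := #|F|.

Definition vecs (W : 'M[F]_3) := [set v : 'rV[F]_3 | (v <= W)%MS].
Definition pts (W : 'M[F]_3) := [set <<v>>%MS | v in vecs W :\ 0%R].

Lemma card_vecs W : #|vecs W| = q ^ \rank W.
Proof.
have -> : vecs W = [set (u *m row_base W)%R | u in [set: 'rV_(\rank W)]].
  apply/setP => v; rewrite inE; apply/idP/imsetP.
  - move=> vW; have : (v <= row_base W)%MS by rewrite eq_row_base.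
    by case/submxP => u ->; exists u; rewrite ?inE.
  - by case=> u _ ->; rewrite -(eq_row_base W) submxMl.
rewrite card_imset; last exact: row_free_inj (row_base_free W).
by rewrite cardsT card_mx mul1n.
Qed.

Lemma fiber W (v : 'rV[F]_3) : v != 0%R -> (v <= W)%MS ->
  [set w in vecs W :\ 0%R | <<w>>%MS == <<v>>%MS] = [set (c *: v)%R | c in [set~ 0%R]].
Proof.
move=> v0 vW; apply/setP => w; rewrite !inE; apply/idP/idP.
- case/andP => /andP [w0 wW] /eqP /genmxP /eqmxP wv.
  have : (w <= v)%MS by rewrite wv.
  case/submxP => D wD.
  have wc : w = (D ord0 ord0 *: v)%R by rewrite wD {1}(mx11_scalar D) mul_scalar_mx.
  rewrite wc; apply: imset_f; rewrite !inE; apply: contraNneq w0 => D0.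
  by rewrite wc D0 scale0r.
- case/imsetP=> c; rewrite !inE => c0 ->.
  rewrite scaler_eq0 negb_or c0 v0 scalemx_sub //=.
  by apply/eqP; apply/genmxP; apply/eqmxP; apply: eqmx_scale.
Qed.

Lemma card_fiber (v : 'rV[F]_3) : v != 0%R ->
  #|[set (c *: v)%R | c in [set~ (0 : F)%R]]| = q.-1.
Proof.
move=> v0; rewrite card_in_imset ?cardsC1 //.
move=> c d _ _ /eqP; rewrite -subr_eq0 -scalerBl scaler_eq0 (negbTE v0) orbF.
by rewrite subr_eq0 => /eqP.
Qed.

Lemma card_pts W : #|vecs W :\ 0%R| = (#|pts W| * q.-1)%N.
Proof.
rewrite -sum1_card (partition_big_imset (fun v => <<v>>%MS)) /= -/(pts W).
rewrite -sum_nat_const; apply: eq_bigr => Q /imsetP [v vN ->].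
move: vN; rewrite !inE => /andP [v0 vW].
rewrite -(card_fiber v0) -(fiber v0 vW) -sum1_card.
by apply: eq_bigl => w; rewrite !inE.
Qed.

Lemma q_gt1 : (1 < q)%N.
Proof. exact: card_finNzRing_gt1. Qed.

Lemma card_vecsD0 W : #|vecs W :\ 0%R| = (q ^ \rank W).-1.
Proof.
have := cardsD1 0%R (vecs W).
by rewrite card_vecs inE sub0mx add1n => ->.
Qed.


Lemma ground_pts : PG2_ground F = pts 1%:M%R.
Proof.
rewrite /PG2_ground /pts.
have -> : vecs 1%:M%R :\ 0%R = [set v : 'rV[F]_3 | v != 0%R].
  by apply/setP => v; rewrite !inE submx1 andbT.
by [].
Qed.

Lemma card_ground : #|PG2_ground F| = (q ^ 2 + q + 1)%N.
Proof.
have h := card_pts 1%:M%R; rewrite card_vecsD0 mxrank1 -ground_pts in h.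
have q1 := q_gt1.
move: h; set N := #|PG2_ground F|.
case: q q1 => [|[|m]] // _ /= h.
apply/eqP; rewrite -(@eqn_pmul2r m.+1) //; apply/eqP; rewrite -h.
rewrite !expnS expn0; nia.
Qed.

Lemma pt_vec Q : Q \in PG2_ground F -> exists2 v : 'rV[F]_3, v != 0%R & Q = <<v>>%MS.
Proof. by case/imsetP => v; rewrite inE => v0 ->; exists v. Qed.

Lemma pt_rank Q : Q \in PG2_ground F -> \rank Q = 1.
Proof. by case/pt_vec => v v0 ->; rewrite genmxE rank_rV v0. Qed.

Lemma PGrank_le3 (A : {set 'M[F]_3}) : PG2_rank A <= 3.
Proof. exact: rank_leq_col. Qed.

Lemma rank_adds2 Q1 Q2 : Q1 \in PG2_ground F -> Q2 \in PG2_ground F -> Q1 != Q2 ->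
  \rank (Q1 + Q2)%MS = 2.
Proof.
move=> h1 h2 ne.
have r1 := pt_rank h1; have r2 := pt_rank h2.
have le : \rank (Q1 + Q2)%MS <= 2.
  by have := leq_of_leqif (mxrank_adds_leqif Q1 Q2); rewrite r1 r2.
apply/eqP; rewrite eqn_leq le /=; rewrite ltnNge; apply/negP => le1.
have s1 : (Q1 <= Q1 + Q2)%MS := addsmxSl _ _.
have s2 : (Q2 <= Q1 + Q2)%MS := addsmxSr _ _.
have e1 : (Q1 + Q2 <= Q1)%MS.
  by rewrite -(geq_leqif (mxrank_leqif_sup s1)) r1.
have e2 : (Q1 + Q2 <= Q2)%MS.
  by rewrite -(geq_leqif (mxrank_leqif_sup s2)) r2.
case/pt_vec: h1 => v1 _ E1; case/pt_vec: h2 => v2 _ E2.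
have e12 : (Q1 == Q2)%MS.
  apply/andP; split; [exact: submx_trans s1 e2 | exact: submx_trans s2 e1].
move: ne; rewrite E1 E2 => /eqP; apply; apply/genmxP.
by move: e12; rewrite E1 E2 !genmxE.
Qed.

Lemma PGrank1 Q : Q \in PG2_ground F -> PG2_rank [set Q] = 1.
Proof. by move=> h; rewrite /PG2_rank big_set1 pt_rank. Qed.

Lemma PGrank2 Q1 Q2 : Q1 \in PG2_ground F -> Q2 \in PG2_ground F -> Q1 != Q2 ->
  PG2_rank [set Q1; Q2] = 2.
Proof.
move=> h1 h2 ne; rewrite /PG2_rank big_setU1 ?big_set1 ?rank_adds2 //.
by rewrite inE.
Qed.

Lemma PG_line_card (A : {set 'M[F]_3}) : A \subset PG2_ground F -> PG2_rank A <= 2 -> #|A| <= q + 1.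
Proof.
move=> AG rA; set W := (\sum_(P in A) P)%MS.
have sub : A \subset pts W.
  apply/subsetP => Q QA; have := subsetP AG Q QA; case/pt_vec => v v0 EQ.
  rewrite EQ; apply: imset_f; rewrite !inE v0 /=.
  have : (Q <= W)%MS by apply: (sumsmx_sup Q).
  by rewrite EQ genmxE.
have h := card_pts W; rewrite card_vecsD0 in h.
have q1 := q_gt1.
apply: leq_trans (subset_leq_card sub) _.
have hk : (q ^ \rank W).-1 <= (q ^ 2).-1.
  rewrite -!subn1 leq_sub2r // leq_pexp2l //; first by apply: ltnW.
move: hk; rewrite h; case: q q1 => [|[|m]] // _ /=.
move=> hk; rewrite -(@leq_pmul2r m.+1) //; apply: leq_trans hk _.
rewrite !expnS expn0; nia.
Qed.

Lemma PG_meet Q1 Q2 Q3 Q4 : Q1 \in PG2_ground F -> Q2 \in PG2_ground F ->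
  Q3 \in PG2_ground F -> Q4 \in PG2_ground F -> Q1 != Q2 -> Q3 != Q4 ->
  exists2 c, c \in PG2_ground F &
    PG2_rank [set Q1; Q2; c] <= 2 /\ PG2_rank [set Q3; Q4; c] <= 2.
Proof.
move=> h1 h2 h3 h4 n12 n34.
set W1 := (Q1 + Q2)%MS; set W2 := (Q3 + Q4)%MS.
have r1 : \rank W1 = 2 by apply: rank_adds2.
have r2 : \rank W2 = 2 by apply: rank_adds2.
have := mxrank_sum_cap W1 W2; rewrite r1 r2.
have := rank_leq_col (W1 + W2)%MS => le3 hs.
have nz : (W1 :&: W2)%MS != 0%R.
  by rewrite -mxrank_eq0; apply/eqP => h0; move: hs; rewrite h0; lia.
set v := nz_row (W1 :&: W2)%MS.
have v0 : v != 0%R by rewrite nz_row_eq0.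
have vc := nz_row_sub (W1 :&: W2)%MS.
exists <<v>>%MS; first by apply: imset_f; rewrite inE.
have cW : forall W : 'M[F]_3, (W1 :&: W2 <= W)%MS -> (<<v>> <= W)%MS.
  by move=> W h; rewrite genmxE; apply: submx_trans vc h.
split.
- apply: (@leq_trans (\rank W1)); last by rewrite r1.
  rewrite /PG2_rank; apply: mxrankS; apply/sumsmx_subP => Q.
  rewrite !inE => /orP [/orP [] | ] /eqP ->.
  + exact: addsmxSl.
  + exact: addsmxSr.
  + by apply: cW; apply: capmxSl.
- apply: (@leq_trans (\rank W2)); last by rewrite r2.
  rewrite /PG2_rank; apply: mxrankS; apply/sumsmx_subP => Q.
  rewrite !inE => /orP [/orP [] | ] /eqP ->.
  + exact: addsmxSl.
  + exact: addsmxSr.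
  + by apply: cW; apply: capmxSr.
Qed.

End PG.

Ltac subt := apply/subsetP => ?; rewrite !inE; let H := fresh in move=> H;
  repeat (case/orP: H => H); by rewrite H ?orbT.

Section R3.
Variables (F : finFieldType) (T : finType) (E : {set T}) (s : {set T} -> nat).
Hypothesis ms : is_matroid E s.
Variables (P L : {set T}) (g : T -> 'M[F]_3).
Hypothesis PE : P \subset E.
Hypothesis LE : L \subset E.
Hypothesis gi : {in P &, injective g}.
Hypothesis gP : g @: P = PG2_ground F.
Hypothesis gr : forall Y : {set T}, Y \subset P -> PG2_rank (g @: Y) = s Y.
Hypothesis Lc : #|L| = (#|F| + 2)%N.
Hypothesis Lr : forall Y : {set T}, Y \subset L -> s Y = minn #|Y| 2.
Hypothesis s3 : forall Y : {set T}, Y \subset E -> s Y <= 3.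
Local Notation q := #|F|.

Lemma inPE p : p \in P -> p \in E. Proof. exact: subsetP PE p. Qed.
Lemma inLE p : p \in L -> p \in E. Proof. exact: subsetP LE p. Qed.
Lemma gG p : p \in P -> g p \in PG2_ground F.
Proof. by move=> pP; rewrite -gP imset_f. Qed.

Lemma sP1 p : p \in P -> s [set p] = 1.
Proof.
move=> pP; rewrite -gr ?sub1set // imset_set1; exact: PGrank1 (gG pP).
Qed.

Lemma sP2 p p' : p \in P -> p' \in P -> p != p' -> s [set p; p'] = 2.
Proof.
move=> pP p'P ne; rewrite -gr; last by rewrite subUset !sub1set pP p'P.
rewrite imsetU1 imset_set1 PGrank2 ?gG //.
by apply: contra ne => /eqP /gi -> .
Qed.

Lemma sL1 x : x \in L -> s [set x] = 1.
Proof. by move=> xL; rewrite Lr ?sub1set // cards1. Qed.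

Lemma sL2 x y : x \in L -> y \in L -> x != y -> s [set x; y] = 2.
Proof. by move=> xL yL ne; rewrite Lr ?cards2 ?ne // subUset !sub1set xL yL. Qed.

Lemma line_card (Y : {set T}) : Y \subset P -> s Y <= 2 -> #|Y| <= q + 1.
Proof.
move=> YP sY.
rewrite -(card_in_imset (f := g)); last by apply: sub_in2 gi => y; apply: (subsetP YP).
apply: PG_line_card; first by rewrite -gP imsetS.
by rewrite gr.
Qed.

Lemma card_P : #|P| = (q ^ 2 + q + 1)%N.
Proof. by rewrite -card_ground -gP card_in_imset. Qed.

Lemma meetP p1 p2 p3 p4 : p1 \in P -> p2 \in P -> p3 \in P -> p4 \in P ->
  p1 != p2 -> p3 != p4 ->
  exists2 c, c \in P & s [set p1; p2; c] <= 2 /\ s [set p3; p4; c] <= 2.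
Proof.
move=> h1 h2 h3 h4 n12 n34.
have ng : forall a b, a \in P -> b \in P -> a != b -> g a != g b.
  by move=> a b aP bP; apply: contra => /eqP /gi ->.
have [c' c'G [r1 r2]] := PG_meet (gG h1) (gG h2) (gG h3) (gG h4) (ng _ _ h1 h2 n12) (ng _ _ h3 h4 n34).
move: c'G; rewrite -gP => /imsetP [c cP ec].
exists c => //; split.
- rewrite -gr; last by rewrite !subUset !sub1set h1 h2 cP.
  by rewrite ?imsetU ?imsetU1 ?imset_set1 -ec.
- rewrite -gr; last by rewrite !subUset !sub1set h3 h4 cP.
  by rewrite ?imsetU ?imsetU1 ?imset_set1 -ec.
Qed.


Lemma sub2E a b : a \in E -> b \in E -> [set a; b] \subset E.
Proof. by move=> ha hb; rewrite !subUset !sub1set ha hb. Qed.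
Lemma sub3E a b c : a \in E -> b \in E -> c \in E -> [set a; b; c] \subset E.
Proof. by move=> ha hb hc; rewrite !subUset !sub1set ha hb hc. Qed.
Lemma sub4E a b c d : a \in E -> b \in E -> c \in E -> d \in E -> [set a; b; c; d] \subset E.
Proof. by move=> ha hb hc hd; rewrite !subUset !sub1set ha hb hc hd. Qed.

Lemma chain a b c : a \in E -> b \in E -> c \in E ->
  s [set a; b] <= 1 -> s [set b; c] <= 1 -> 1 <= s [set b] -> s [set a; c] <= 1.
Proof.
move=> ha hb hc h1 h2 h3.
have := @m_sm _ _ _ ms [set a; b] [set b; c] [set b] [set a; c] (sub2E ha hb) (sub2E hb hc).
have s1 : [set b] \subset [set a; b] by subt.
have s2 : [set b] \subset [set b; c] by subt.
have s4 : [set a; c] \subset [set a; b] :|: [set b; c] by subt.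
move/(_ s1 s2 s4); lia.
Qed.

Lemma step1 : exists2 x, x \in L & forall p, p \in P -> 2 <= s [set x; p].
Proof.
case: (boolP [exists x in L, [forall p in P, 1 < s [set x; p]]]).
  case/existsP => x /andP [xL /forallP H]; exists x => // p pP.
  by have := H p; rewrite pP.
move/existsPn => H.
have H' : forall x, x \in L -> exists p, (p \in P) && (s [set x; p] <= 1).
  move=> x xL; have := H x; rewrite xL /= => /forallPn [p].
  by rewrite negb_imply -leqNgt => hp; exists p.
pose h x := odflt x [pick p in P | s [set x; p] <= 1].
have hP : forall x, x \in L -> h x \in P /\ s [set x; h x] <= 1.
  move=> x xL; rewrite /h; case: pickP => [p /andP [] //|].
  by case: (H' x xL) => p hp /(_ p); rewrite hp.
have hinj : {in L &, injective h}.
  move=> x y xL yL hxy; apply/eqP; apply/negPn/negP => ne.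
  have [hxP hx] := hP x xL; have [hyP hy] := hP y yL.
  have e : [set h x; y] = [set y; h x] by apply/setP => z; rewrite !inE orbC.
  have := @chain x (h x) y (inLE xL) (inPE hxP) (inLE yL) hx.
  rewrite e hxy hy sP1 ?hxy // => /(_ isT isT).
  by rewrite sL2.
have hLP : h @: L \subset P by apply/subsetP => ? /imsetP [x xL ->]; case: (hP x xL).
have hLE : h @: L \subset E := subset_trans hLP PE.
have cl : s (L :|: h @: L) <= s L.
  apply: (m_closure ms LE hLE) => e /imsetP [x xL ->].
  have [hxP hx] := hP x xL.
  have := @m_sm _ _ _ ms L [set x; h x] [set x] (L :|: [set h x]) LE (sub2E (inLE xL) (inPE hxP)).
  have s1 : [set x] \subset L by rewrite sub1set.
  have s2 : [set x] \subset [set x; h x] by subt.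
  have s3' : L :|: [set h x] \subset L :|: [set x; h x] by subt.
  move/(_ s1 s2 s3'); rewrite sL1 //; lia.
have sh : s (h @: L) <= 2.
  have := m_mono ms (subsetUr L (h @: L)); rewrite subUset LE hLE => /(_ isT).
  have := Lr (subxx L); rewrite Lc; lia.
have := line_card hLP sh; rewrite card_in_imset // Lc; lia.
Qed.

Variable x : T.
Hypothesis xL : x \in L.
Hypothesis xP : forall p, p \in P -> 2 <= s [set x; p].

Lemma set3C (a b c : T) : [set a; b; c] = [set b; a; c].
Proof. by apply/setP => z; rewrite !inE (orbC (z == a)). Qed.
Lemma set2C (a b : T) : [set a; b] = [set b; a].
Proof. by apply/setP => z; rewrite !inE orbC. Qed.

Definition bad p := [exists p' in P, (p' != p) && (s [set p; p'; x] <= 2)].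

Lemma good p p' : p \in P -> ~~ bad p -> p' \in P -> p' != p -> 3 <= s [set p; p'; x].
Proof.
move=> pP /existsPn /(_ p') nb p'P ne; move: nb; rewrite p'P ne /=; lia.
Qed.

Lemma xE : x \in E. Proof. exact: inLE xL. Qed.

Lemma badline : forall b0, b0 \in P -> bad b0 ->
  s [set p in P | bad p] <= 2.
Proof.
move=> b0 b0P /existsP [b0' /andP [b0'P /andP [n0 hK]]].
set K := [set b0; b0'; x].
have hK0 := hK.
have KE : K \subset E := sub3E (inPE b0P) (inPE b0'P) xE.
have BE : [set p in P | bad p] \subset E.
  by apply: subset_trans PE; apply/subsetP => p; rewrite inE => /andP [].
have K2 : 2 <= s K.
  have e2 : s [set b0; b0'] = 2 by apply: sP2; rewrite // eq_sym.
  have sub : [set b0; b0'] \subset K by rewrite /K; subt.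
  by have := m_mono ms sub KE; rewrite e2.
have := m_mono ms (subsetUr K [set p in P | bad p]); rewrite subUset KE BE => /(_ isT).
move/leq_trans; apply; apply: leq_trans hK; apply: (m_closure ms KE BE) => b; rewrite inE => /andP [bP].
case/existsP => b' /andP [b'P /andP [nb hb]].
have n0' : b0 != b0' by rewrite eq_sym.
have nb' : b != b' by rewrite eq_sym.
have [c cP [c1 c2]] := meetP b0P b0'P bP b'P n0' nb'.
have Ex := xE; have Eb0 := inPE b0P; have Eb0' := inPE b0'P; have Eb := inPE bP;
have Eb' := inPE b'P; have Ec := inPE cP.
have A1 : s [set b0; b0'; x; c] <= 2.
  have := @m_sm _ _ _ ms [set b0; b0'; x] [set b0; b0'; c] [set b0; b0'] [set b0; b0'; x; c]
    (sub3E Eb0 Eb0' Ex) (sub3E Eb0 Eb0' Ec).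
  have t1 : [set b0; b0'] \subset [set b0; b0'; x] by subt.
  have t2 : [set b0; b0'] \subset [set b0; b0'; c] by subt.
  have t3 : [set b0; b0'; x; c] \subset [set b0; b0'; x] :|: [set b0; b0'; c] by subt.
  move/(_ t1 t2 t3); rewrite (sP2 b0P b0'P n0') => h.
  rewrite -(leq_add2r 2); apply: leq_trans h _; exact: leq_add hK0 c1.
have A2 : s [set b; b'; x; c] <= 2.
  have := @m_sm _ _ _ ms [set b; b'; x] [set b; b'; c] [set b; b'] [set b; b'; x; c]
    (sub3E Eb Eb' Ex) (sub3E Eb Eb' Ec).
  have t1 : [set b; b'] \subset [set b; b'; x] by subt.
  have t2 : [set b; b'] \subset [set b; b'; c] by subt.
  have t3 : [set b; b'; x; c] \subset [set b; b'; x] :|: [set b; b'; c] by subt.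
  move/(_ t1 t2 t3); rewrite (sP2 bP b'P nb') => h.
  rewrite -(leq_add2r 2); apply: leq_trans h _; exact: leq_add hb c2.
have := @m_sm _ _ _ ms [set b0; b0'; x; c] [set b; b'; x; c] [set x; c] (K :|: [set b])
    (sub4E Eb0 Eb0' Ex Ec) (sub4E Eb Eb' Ex Ec).
have t1 : [set x; c] \subset [set b0; b0'; x; c] by subt.
have t2 : [set x; c] \subset [set b; b'; x; c] by subt.
have t3 : K :|: [set b] \subset [set b0; b0'; x; c] :|: [set b; b'; x; c] by rewrite /K; subt.
move/(_ t1 t2 t3) => h; have h2 := xP cP.
apply: (leq_trans _ K2).
rewrite -(leq_add2r 2); apply: leq_trans (leq_add (leqnn _) h2) _.
exact: leq_trans h (leq_add A1 A2).
Qed.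

Lemma pairs_rank (S : {set T}) : S \subset P ->
  (forall p p', p \in S -> p' \in S -> p != p' -> 3 <= s [set p; p'; x]) ->
  forall Y : {set T}, Y \subset S -> s (Y :|: [set x]) = minn #|Y| 2 + 1.
Proof.
move=> SP H Y YS.
have YP : Y \subset P := subset_trans YS SP.
have YE : Y \subset E := subset_trans YP PE.
have YxE : Y :|: [set x] \subset E by rewrite subUset YE sub1set xE.
case: (ltnP 1 #|Y|) => [Y2 | le1].
  case/card_gt1P: (Y2) => p [p' [pY p'Y ne]].
  rewrite (elimT minn_idPr Y2).
  apply/eqP; rewrite eqn_leq s3 //=.
  have sub : [set p; p'; x] \subset Y :|: [set x].
    by rewrite !subUset !sub1set !inE pY p'Y eqxx !orbT.
  exact: leq_trans (H p p' (subsetP YS p pY) (subsetP YS p' p'Y) ne) (m_mono ms sub YxE).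
have [Y0|Yn0] := eqVneq #|Y| 0.
  by rewrite (cards0_eq Y0) set0U sL1 // cards0.
have /cards1P [p Yp] : #|Y| == 1 by rewrite eqn_leq le1 lt0n Yn0.
rewrite Yp in YP *.
have pP : p \in P by move: YP; rewrite sub1set.
rewrite cards1 /=.
apply/eqP; rewrite eqn_leq.
have e : [set x; p] = [set p] :|: [set x] by apply/setP => z; rewrite !inE orbC.
rewrite -e xP // andbT.
have := m_unit ms (A := [set p]) (e := x); rewrite sub1set inPE // xE sP1 // e.
by move/(_ isT isT).
Qed.

Lemma step2 : exists S : {set T}, [/\ S \subset P, (q ^ 2 + 1 <= #|S|)%N &
  forall Y : {set T}, Y \subset S -> s (Y :|: [set x]) = minn #|Y| 2 + 1].
Proof.
set B := [set p in P | bad p].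
have BP : B \subset P by apply/subsetP => p; rewrite inE => /andP [].
have nbad : forall p, p \in P -> p \notin B -> ~~ bad p.
  by move=> p pP; rewrite inE pP.
have sB0 : forall b0, b0 \in B -> s B <= 2.
  by move=> b0; rewrite inE => /andP [b0P hb]; apply: (badline b0P).
have BinP : forall b, b \in B -> b \in P by move=> b; rewrite inE => /andP [].
clearbody B.
case: (set_0Vmem B) => [B0 | [b0 b0B]].
  exists P; split => //.
    by rewrite card_P -addnA leq_add2l leq_addl.
  apply: pairs_rank => // p p' pP p'P ne.
  by apply: good => //; [apply: nbad; rewrite // B0 inE | rewrite eq_sym].
have b0P : b0 \in P := BinP b0 b0B.
have sB : s B <= 2 := sB0 b0 b0B.
have cB := line_card BP sB.
exists ((P :\: B) :|: [set b0]); split.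
- by rewrite subUset subsetDl sub1set.
- rewrite setUC cardsU1 inE b0B /= cardsD (setIidPr BP) card_P.
  have key : forall a b c : nat, c <= b + 1 -> a + 1 <= 1 + (a + b + 1 - c) by move=> *; lia.
  exact: key.
- apply: pairs_rank; first by rewrite subUset subsetDl sub1set.
  move=> p p'; rewrite !inE => /orP [/andP [pB pP] | /eqP ->] p'S ne.
    have p'P : p' \in P by case/orP: p'S => [/andP [] | /eqP ->].
    by apply: good => //; [exact: nbad | rewrite eq_sym].
  move: p'S => /orP [/andP [p'B p'P] | /eqP e]; last by rewrite e eqxx in ne.
  by rewrite set3C; apply: good => //; exact: nbad.
Qed.

End R3.

Section Gen.
Variables (T : finType) (E : {set T}) (r : {set T} -> nat).
Hypothesis mr : is_matroid E r.

Lemma contract_matroid (C : {set T}) : C \subset E ->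
  is_matroid E (fun Y => r (Y :|: C) - r C).
Proof.
move=> CE.
have mono : forall Y : {set T}, Y \subset E -> r C <= r (Y :|: C).
  by move=> Y YE; apply: (m_mono mr (subsetUr Y C)); rewrite subUset YE.
split.
- move=> X XE; have := m_sm mr XE CE (sub0set X) (sub0set C) (subxx (X :|: C)).
  rewrite (m_set0 mr); have := m_card mr XE; lia.
- move=> X Y XY YE; have := m_mono mr (setSU C XY); rewrite subUset YE CE => /(_ isT).
  have := mono X (subset_trans XY YE); lia.
- move=> X Y XE YE.
  have := m_sub mr (X := X :|: C) (Y := Y :|: C); rewrite !subUset XE YE CE => /(_ isT isT).
  have -> : (X :|: C) :|: (Y :|: C) = (X :|: Y) :|: C.
    by apply/setP => z; rewrite !inE; case: (z \in X); case: (z \in Y); case: (z \in C).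
  have -> : (X :|: C) :&: (Y :|: C) = (X :&: Y) :|: C.
    by apply/setP => z; rewrite !inE; case: (z \in X); case: (z \in Y); case: (z \in C).
  have := mono (X :&: Y) (subset_trans (subsetIl _ _) XE).
  have XYE : X :|: Y \subset E by rewrite subUset XE YE.
  have := mono (X :|: Y) XYE.
  have := mono X XE; have := mono Y YE; lia.
Qed.

Lemma mskew (X C Y : {set T}) : X \subset E -> C \subset E -> r (C :|: X) = r C + r X ->
  Y \subset X -> r (Y :|: C) = r Y + r C.
Proof.
move=> XE CE h YX.
have YE := subset_trans YX XE.
apply/eqP; rewrite eqn_leq; apply/andP; split.
  have := m_sm mr YE CE (sub0set Y) (sub0set C) (subxx _); rewrite (m_set0 mr); lia.
have := @m_sm _ _ _ mr (Y :|: C) X Y (C :|: X); rewrite subUset YE CE XE.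
have s1 : C :|: X \subset (Y :|: C) :|: X.
  by apply/subsetP => z; rewrite !inE; case/orP => ->; rewrite ?orbT.
move/(_ isT isT (subsetUl _ _) YX s1); lia.
Qed.

Hypothesis rd : round E r.

Lemma greedy (P L : {set T}) : P \subset E -> L \subset E -> r L <= r P ->
  exists C : {set T}, [/\ C \subset E, r (C :|: P) = r C + r P,
    r (C :|: L) = r C + r L & r E <= r (C :|: P)].
Proof.
move=> PE LE rLP.
suff : forall n (C : {set T}), C \subset E -> r (C :|: P) = r C + r P ->
  r (C :|: L) = r C + r L -> r E - r (C :|: P) <= n ->
  exists C : {set T}, [/\ C \subset E, r (C :|: P) = r C + r P,
    r (C :|: L) = r C + r L & r E <= r (C :|: P)].
  move/(_ (r E) set0 (sub0set E)); rewrite !set0U (m_set0 mr) !add0n.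
  by move/(_ erefl erefl (leq_subr _ _)).
elim => [|n IH] C CE hP hL hn.
  by exists C; split => //; lia.
case: (leqP (r E) (r (C :|: P))) => [le | lt].
  by exists C.
have CPE : C :|: P \subset E by rewrite subUset CE PE.
have CLE : C :|: L \subset E by rewrite subUset CE LE.
case: (boolP [exists e in E, (r (C :|: P) < r ((C :|: P) :|: [set e])) &&
                             (r (C :|: L) < r ((C :|: L) :|: [set e]))]).
  case/existsP => e /andP [eE /andP [h1 h2]].
  have eE' : [set e] \subset E by rewrite sub1set.
  have CeE : C :|: [set e] \subset E by rewrite subUset CE eE'.
  have u1 := m_unit mr CPE eE; have u2 := m_unit mr CLE eE; have u3 := m_unit mr CE eE.
  have e1 : (C :|: [set e]) :|: P = (C :|: P) :|: [set e] by rewrite setUAC.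
  have e2 : (C :|: [set e]) :|: L = (C :|: L) :|: [set e] by rewrite setUAC.
  have sP := m_sm mr CeE PE (sub0set _) (sub0set _) (subxx _).
  have sL := m_sm mr CeE LE (sub0set _) (sub0set _) (subxx _).
  rewrite (m_set0 mr) e1 in sP; rewrite (m_set0 mr) e2 in sL.
  apply: (IH (C :|: [set e])) => //; rewrite ?e1 ?e2; lia.
move/existsPn => H.
set X := [set e in E | r ((C :|: P) :|: [set e]) <= r (C :|: P)].
have XE : X \subset E by apply/subsetP => e; rewrite inE => /andP [].
have YE : E :\: X \subset E := subsetDl _ _.
have hX : r X < r E.
  have h := m_closure mr CPE XE.
  have : r (C :|: P :|: X) <= r (C :|: P).
    by apply: h => e; rewrite inE => /andP [].
  have := m_mono mr (subsetUr (C :|: P) X); rewrite subUset CPE XE => /(_ isT); lia.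
have hY : r (E :\: X) < r E.
  have h : r (C :|: L :|: (E :\: X)) <= r (C :|: L).
    apply: (m_closure mr CLE YE) => e; rewrite !inE => /andP [eX eE].
    have := H e; rewrite eE /= negb_and -!leqNgt.
    by move: eX; rewrite eE /= => /negbTE -> .
  have := m_mono mr (subsetUr (C :|: L) (E :\: X)); rewrite subUset CLE YE => /(_ isT); lia.
clearbody X.
have e1 : X :|: (E :\: X) = E.
  apply/setP => z; rewrite !inE; case zX: (z \in X) => /=; last by [].
  by rewrite (subsetP XE z zX).
have e2 : X :&: (E :\: X) = set0.
  by apply/setP => z; rewrite !inE; case: (z \in X); rewrite ?andbF.
by case: (rd e1 e2) => h; [move: hX | move: hY]; rewrite h ltnn.
Qed.

End Gen.

Lemma sub_card (T : finType) (A : {set T}) n : n <= #|A| -> exists2 B : {set T}, B \subset A & #|B| = n.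
Proof.
have [k] := ubnP #|A|; elim: k A => [//|k IH] A Ak nA.
case: (eqVneq #|A| n) => [<-|ne]; first by exists A.
have : 0 < #|A| by lia.
case/card_gt0P => a aA.
have cD : #|A :\ a| = #|A|.-1 by rewrite (cardsD1 a A) aA.
have [B BA cB] := IH (A :\ a) ltac:(lia) ltac:(lia).
by exists B => //; apply: subset_trans BA (subsetDl _ _).
Qed.

Lemma enum_iso (T : finType) (A : {set T}) n : #|A| = n -> 0 < n ->
  exists f : T -> 'I_n, {in A &, injective f} /\ f @: A = setT.
Proof.
case: n => [//|n] cA _.
pose f t : 'I_n.+1 := inord (index t (enum A)).
have lt : forall t, t \in A -> index t (enum A) < n.+1.
  by move=> t tA; rewrite -cA cardE index_mem mem_enum.
have fi : {in A &, injective f}.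
  move=> t t' tA t'A e0; have := congr1 (@nat_of_ord _) e0; rewrite /f !inordK ?lt // => e.
  have h1 := @nth_index _ t t (enum A); have h2 := @nth_index _ t t' (enum A).
  rewrite !mem_enum in h1 h2; by rewrite -(h1 tA) -(h2 t'A) e.
exists f; split => //.
apply/eqP. rewrite eqEcard. rewrite subsetT. rewrite cardsT card_ord. rewrite /=. have := card_in_imset fi. move=> ->. by rewrite cA.
Qed.

Unset Implicit Arguments.

Theorem lemma2p2 (F : finFieldType) (T : finType) (E : {set T})
    (r : {set T} -> nat) :
  is_matroid E r -> round E r ->
  (exists X : {set T}, X \subset E /\
     matroid_iso X r (@unif_ground (#|F| + 2)%N) (@unif_rank 2 (#|F| + 2)%N)) ->
  (exists X : {set T}, X \subset E /\
     matroid_iso X r (PG2_ground F) (@PG2_rank F)) ->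
  exists C D : {set T}, [/\ C \subset E, D \subset E, [disjoint C & D] &
     matroid_iso (minor_ground E C D) (minor_rank r C)
       (@unif_ground (#|F| ^ 2 + 1)%N) (@unif_rank 2 (#|F| ^ 2 + 1)%N)].
Proof.
move=> mr rd [L [LE [fL [fLi fLimg fLr]]]] [P [PE [fP [fPi fPimg fPr]]]].
have Lc : #|L| = (#|F| + 2)%N.
  by rewrite -(card_in_imset fLi) fLimg /unif_ground cardsT card_ord.
have Lr0 : forall Y : {set T}, Y \subset L -> r Y = minn #|Y| 2.
  move=> Y YL; rewrite -fLr // /unif_rank card_in_imset //.
  by apply: sub_in2 fLi => y; apply: (subsetP YL).
have gr0 : forall Y : {set T}, Y \subset P -> PG2_rank (fP @: Y) = r Y.
  by move=> Y YP; rewrite fPr.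
have rL : r L = 2 by rewrite Lr0 // Lc; apply/minn_idPr; rewrite leq_addl.
have rLP : r L <= r P.
  have key : forall a b, 1 < b -> 1 < a + b + 1 by move=> a b; lia.
  have : 1 < #|P| by rewrite (card_P fPi fPimg); apply: key; exact: card_finNzRing_gt1.
  case/card_gt1P => p [p' [pP p'P ne]].
  rewrite rL -(sP2 fPi fPimg gr0 pP p'P ne); apply: (m_mono mr _ PE).
  by rewrite subUset !sub1set pP p'P.
have [C [CE hP hL hE]] := greedy mr rd PE LE rLP.
pose sc := fun Y : {set T} => r (Y :|: C) - r C.
have ms : is_matroid E sc := contract_matroid mr CE.
have skP : forall Y : {set T}, Y \subset P -> sc Y = r Y.
  by move=> Y YP; rewrite /sc (mskew mr PE CE hP YP) addnK.
have skL : forall Y : {set T}, Y \subset L -> sc Y = r Y.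
  by move=> Y YL; rewrite /sc (mskew mr LE CE hL YL) addnK.
have gr : forall Y : {set T}, Y \subset P -> PG2_rank (fP @: Y) = sc Y.
  by move=> Y YP; rewrite skP // gr0.
have Lr : forall Y : {set T}, Y \subset L -> sc Y = minn #|Y| 2.
  by move=> Y YL; rewrite skL // Lr0.
have s3 : forall Y : {set T}, Y \subset E -> sc Y <= 3.
  move=> Y YE; have rP3 : r P <= 3 by rewrite -gr0 // PGrank_le3.
  have CPE : C :|: P \subset E by rewrite subUset CE PE.
  have := m_mono mr (subsetUl C P) CPE.
  have YCE : Y :|: C \subset E by rewrite subUset YE CE.
  have := m_mono mr YCE (subxx E).
  rewrite /sc; lia.
have [x xL xP] := step1 ms PE LE fPi fPimg gr Lc Lr.
have [S [SP cS Sr]] := step2 ms PE LE fPi fPimg gr Lc Lr s3 xL xP.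
have [S' S'S cS'] := sub_card cS.
have [f [fi fimg]] := enum_iso cS' (ltn_addl _ (ltnSn 0)).
have xE : x \in E := subsetP LE x xL.
have sx1 : sc [set x] = 1 := sL1 Lr xL.
have S'P : S' \subset P := subset_trans S'S SP.
have S'E : S' \subset E := subset_trans S'P PE.
have notC : forall y, sc [set y] = 1 -> y \notin C.
  move=> y h; apply/negP => yC; move: h; rewrite /sc.
  have -> : [set y] :|: C = C by apply/setUidPr; rewrite sub1set.
  by rewrite subnn.
have yS1 : forall y, y \in S' -> y \notin C.
  by move=> y yS; apply: notC; apply: (sP1 fPimg gr); apply: (subsetP S'P).
have yS2 : forall y, y \in S' -> y != x.
  move=> y yS; apply/eqP => yx.
  have := Sr [set y]; rewrite sub1set (subsetP S'S y yS) cards1 => /(_ isT).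
  by rewrite yx setUid sx1.
exists (C :|: [set x]), (E :\: ((C :|: [set x]) :|: S')); split.
- by rewrite subUset CE sub1set xE.
- exact: subsetDl.
- rewrite -setI_eq0; apply/eqP/setP => y; rewrite !inE.
  by case: (y \in C); case: (y == x); case: (y \in S'); case: (y \in E).
have G : minor_ground E (C :|: [set x]) (E :\: ((C :|: [set x]) :|: S')) = S'.
  apply/setP => y; rewrite /minor_ground !inE.
  case yS: (y \in S').
    by rewrite (subsetP S'E y yS) (negbTE (yS1 y yS)) (negbTE (yS2 y yS)).
  by case: (y \in C); case: (y == x); case: (y \in E).
rewrite G; exists f; split => //.
move=> Y YS; rewrite /unif_rank (card_in_imset (sub_in2 (subsetP YS) fi)) /minor_rank.
have h1 := Sr Y (subset_trans YS S'S).
rewrite /sc in h1 sx1.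
have -> : Y :|: (C :|: [set x]) = (Y :|: [set x]) :|: C.
  by apply/setP => z; rewrite !inE; case: (z \in Y); case: (z \in C); case: (z == x).
rewrite (setUC C [set x]).
have key : forall a b c m : nat, a - c = m + 1 -> b - c = 1 -> m = a - b by move=> *; lia.

exact: key h1 sx1.
Qed.
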